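(* Let $C$ be a Pauli-Square-Root Clifford and $P$ a Pauli, both acting on the same $t$ qubits. Then there is a $t$-qubit Pauli $Q$ such that $$C(P)\,(I\otimes C)=C(Q)\,(I\otimes C)\,C(P),$$ where the first tensor factor is a single control qubit; moreover $Q$ either commutes or anticommutes with $C$, and $\mathrm{Supp}(Q)\subseteq\mathrm{Supp}(C)$.
   Context: Paulis are tensor products of $I,X,Y,Z$ times a phase in $\{\pm1,\pm i\}$; a Clifford is a unitary mapping Paulis to Paulis under conjugation. A Pauli-Square-Root Clifford (PSC) is a Clifford that is not a Pauli and whose square is a Pauli. For a unitary $U$ on $t$ qubits, $C(U)=|0\rangle\langle0|\otimes I+|1\rangle\langle1|\otimes U$ on $1+t$ qubits (control first). $\mathrm{Supp}(W)$ denotes the set of qubits on which an operator $W$ acts nontrivially. *)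

(* Defs.v *)
From HB Require Import structures.
From mathcomp Require Import all_boot all_order all_algebra.
Set Implicit Arguments. Unset Strict Implicit. Unset Printing Implicit Defensive.
Import Order.TTheory GRing.Theory Num.Theory.
Local Open Scope ring_scope.

Section Qubits.
Variable K : numClosedFieldType.

(* t-qubit operators: matrices indexed by basis states 'I_(2^t);
   qubit k of basis state x is the k-th binary digit of x. *)
Definition bit (t : nat) (k : 'I_t) (x : 'I_(2 ^ t)) : bool := odd (x %/ 2 ^ k).

Definition clearbit (t : nat) (k : 'I_t) (x : 'I_(2 ^ t)) : 'I_(2 ^ t) :=
  insubd x (val x - (bit k x : nat) * 2 ^ k)%N.

(* single-qubit Paulis: 0 = I, 1 = X, 2 = Y, 3 = Z ; entries <a|sigma|b> *)
Definition sigma (j : 'I_4) (a b : bool) : K :=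
  match val j with
  | 0 => (a == b)%:R
  | 1 => (a != b)%:R
  | 2 => if a == b then 0 else if b then - 'i else 'i
  | _ => if a == b then (if a then -1 else 1) else 0
  end.

Definition pauli_string (t : nat) (p : 'I_t -> 'I_4) : 'M[K]_(2 ^ t) :=
  \matrix_(x, y) \prod_(k < t) sigma (p k) (bit k x) (bit k y).

Definition is_pauli (t : nat) (W : 'M[K]_(2 ^ t)) : Prop :=
  exists (c : K) (p : 'I_t -> 'I_4),
    [\/ c = 1, c = -1, c = 'i | c = - 'i] /\ W = c *: pauli_string p.

Definition adjoint (n : nat) (A : 'M[K]_n) : 'M[K]_n := (map_mx Num.conj A)^T.

Definition unitary (n : nat) (U : 'M[K]_n) : Prop :=
  U *m adjoint U = 1%:M /\ adjoint U *m U = 1%:M.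

Definition is_clifford (t : nat) (U : 'M[K]_(2 ^ t)) : Prop :=
  unitary U /\ forall P, is_pauli P -> is_pauli (U *m P *m adjoint U).

Definition is_PSC (t : nat) (C : 'M[K]_(2 ^ t)) : Prop :=
  is_clifford C /\ ~ is_pauli C /\ is_pauli (C *m C).

(* W acts trivially on qubit k : W = I_k (x) A for an operator A on the
   other qubits (A's entries indexed with qubit k cleared) *)
Definition acts_trivially_on (t : nat) (W : 'M[K]_(2 ^ t)) (k : 'I_t) : Prop :=
  exists A : 'M[K]_(2 ^ t), forall x y,
    W x y = (bit k x == bit k y)%:R * A (clearbit k x) (clearbit k y).

Definition in_supp (t : nat) (W : 'M[K]_(2 ^ t)) (k : 'I_t) : Prop :=
  ~ acts_trivially_on W k.

(* controlled-U, control qubit first (most significant): |0><0|(x)I + |1><1|(x)U *)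
Definition ctrl (t : nat) (U : 'M[K]_(2 ^ t)) : 'M[K]_(2 ^ t + 2 ^ t) :=
  block_mx 1%:M 0 0 U.

Definition idtens (t : nat) (U : 'M[K]_(2 ^ t)) : 'M[K]_(2 ^ t + 2 ^ t) :=
  block_mx U 0 0 U.

End Qubits.

(* Main.v *)
Require Import Defs.
From HB Require Import structures.
From mathcomp Require Import all_boot all_order all_algebra.
From mathcomp Require Import zify ring.
Import GRing.Theory Num.Theory.
Local Open Scope ring_scope.
Set Implicit Arguments. Unset Strict Implicit.

Lemma bits_nat_inj (t : nat) : forall x y : nat, (x < 2 ^ t)%N -> (y < 2 ^ t)%N ->
  (forall k, (k < t)%N -> odd (x %/ 2 ^ k) = odd (y %/ 2 ^ k)) -> x = y.
Proof.
elim: t => [|t IH] x y.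
  by rewrite expn0 !ltnS !leqn0 => /eqP-> /eqP->.
move=> hx hy hb.
have := hb 0%N isT; rewrite expn0 !divn1 => h0.
have e : (x %/ 2 = y %/ 2)%N.
  apply: IH; rewrite ?ltn_divLR // -?expnSr //.
  move=> k hk; have := hb k.+1 hk; by rewrite expnS !divnMA => ->.
by rewrite (divn_eq x 2) (divn_eq y 2) e !modn2 h0.
Qed.

Section Bits.
Variable t : nat.
Definition bitsf (x : 'I_(2 ^ t)) : {ffun 'I_t -> bool} := [ffun k => bit k x].

Lemma bitsf_inj : injective bitsf.
Proof.
move=> x y /ffunP h; apply: val_inj; apply: bits_nat_inj (ltn_ord x) (ltn_ord y) _.
move=> k hk; have := h (Ordinal hk); by rewrite !ffunE.
Qed.

Lemma bitsf_bij : bijective bitsf.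
Proof. apply: (inj_card_bij (@bitsf_inj)); by rewrite card_ffun card_bool !card_ord. Qed.

Lemma bit_eq (x y : 'I_(2 ^ t)) : (forall k, bit k x = bit k y) -> x = y.
Proof. by move=> h; apply: bitsf_inj; apply/ffunP => k; rewrite !ffunE. Qed.

Definition ord0t : 'I_(2 ^ t) := Ordinal (expn_gt0 2 t).
Definition fromb (f : {ffun 'I_t -> bool}) : 'I_(2 ^ t) :=
  odflt ord0t [pick x | bitsf x == f].

Lemma frombK f : bitsf (fromb f) = f.
Proof.
rewrite /fromb; case: pickP => [x /eqP //|H].
have [g _ gK] := bitsf_bij; by have := H (g f); rewrite gK eqxx.
Qed.

Lemma bit_fromb f k : bit k (fromb f) = f k.
Proof. by rewrite -(frombK f) ffunE frombK. Qed.
End Bits.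

Section Sums.
Variable K : numClosedFieldType.
Variable t : nat.

Lemma sum_bits (F : 'I_t -> bool -> K) :
  \sum_(z : 'I_(2 ^ t)) \prod_k F k (bit k z) = \prod_k \sum_(b : bool) F k b.
Proof.
rewrite bigA_distr_bigA /=.
rewrite (reindex (@bitsf t)) /=; last first.
  by have [g h1 h2] := bitsf_bij t; exists g => x _; [apply: h1|apply: h2].
by apply: eq_bigr => z _; apply: eq_bigr => k _; rewrite ffunE.
Qed.

Lemma prod_nat_bool (b : 'I_t -> bool) :
  \prod_k ((b k)%:R : K) = ([forall k, b k])%:R.
Proof.
case: forallP => H.
  by rewrite big1 // => k _; rewrite H.
have [k hk] : exists k, ~~ b k.
  by apply/existsP; rewrite -negb_forall; apply/negP => /forallP.
by rewrite (bigD1 k) //= (negbTE hk) mul0r.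
Qed.
End Sums.

Definition pmn (a c : nat) : nat :=
  match a, c with
  | 0, c => c | a, 0 => a
  | 1, 2 => 3 | 1, 3 => 2 | 2, 1 => 3 | 2, 3 => 1 | 3, 1 => 2 | 3, 2 => 1
  | _, _ => 0 end.
Definition pm (a c : 'I_4) : 'I_4 := inord (pmn a c).

Section Table.
Variable K : numClosedFieldType.
Definition om (a c : nat) : K :=
  match a, c with
  | 1, 2 => 'i | 2, 1 => - 'i | 1, 3 => - 'i | 3, 1 => 'i | 2, 3 => 'i | 3, 2 => - 'i
  | _, _ => 1 end.

Lemma ii : 'i * 'i = -1 :> K. Proof. by rewrite -expr2 sqrCi. Qed.

Lemma sigma_mul (a c : 'I_4) u v :
  \sum_(b : bool) sigma K a u b * sigma K c b v = om a c * sigma K (pm a c) u v.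
Proof.
rewrite big_bool /= /pm.
case: a => [[|[|[|[|a]]]] ha] //; case: c => [[|[|[|[|c]]]] hc] //;
rewrite /sigma /= inordK //=;
case: u; case: v => /=;
rewrite ?mulr0 ?mul0r ?mulr1 ?mul1r ?addr0 ?add0r ?mulrN ?mulNr ?opprK ?ii ?opprK ?mulrN1 ?mulN1r //.
all: by rewrite ?mulr1 ?mul1r.
Qed.
End Table.

Section Paulis.
Variable K : numClosedFieldType.
Definition phase (c : K) := [\/ c = 1, c = -1, c = 'i | c = - 'i].
Definition sgn (s : K) := s = 1 \/ s = -1.


Lemma phaseM c d : phase c -> phase d -> phase (c * d).
Proof.
case=> ->; case=> ->; rewrite /phase ?mulr1 ?mul1r ?mulrN ?mulNr ?mulr1 ?ii ?opprK ?mul1r;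
  first [exact: Or41 | exact: Or42 | exact: Or43 | exact: Or44].
Qed.

Lemma phase_om (a c : 'I_4) : phase (om K a c).
Proof.
case: a => [[|[|[|[|a]]]] ha] //; case: c => [[|[|[|[|c]]]] hc] //=;
rewrite /phase; auto using Or41, Or42, Or43, Or44.
Qed.

Lemma phase_prod I (r : seq I) (P : pred I) (F : I -> K) :
  (forall i, phase (F i)) -> phase (\prod_(i <- r | P i) F i).
Proof. by move=> H; apply: big_ind => //; [exact: Or41|exact: phaseM]. Qed.

Lemma sgnM s u : sgn s -> sgn u -> sgn (s * u).
Proof. by case=> ->; case=> ->; rewrite /sgn ?mulr1 ?mul1r ?mulN1r ?opprK; auto. Qed.

Lemma om_comm (a c : 'I_4) : exists2 s, sgn s & om K a c = s * om K c a.
Proof.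
case: a => [[|[|[|[|a]]]] ha] //; case: c => [[|[|[|[|c]]]] hc] //=;
first [ exists 1; [by left| by rewrite mul1r] | exists (-1); [by right| by rewrite mulN1r ?opprK]].
Qed.

Lemma pm_comm (a c : 'I_4) : pm a c = pm c a.
Proof. by case: a => [[|[|[|[|a]]]] ha] //; case: c => [[|[|[|[|c]]]] hc]. Qed.

Lemma pm_self (a : 'I_4) : pm a a = 0.
Proof. by case: a => [[|[|[|[|a]]]] ha] //; apply: val_inj; rewrite /= inordK. Qed.

Lemma om_self (a : 'I_4) : om K a a = 1.
Proof. by case: a => [[|[|[|[|a]]]] ha]. Qed.

Lemma conjN (x : K) : (- x)^* = - x^*. Proof. by rewrite rmorphN. Qed.
Lemma conj0 : (0 : K)^* = 0. Proof. by rewrite rmorph0. Qed.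

Lemma sigma_conj (a : 'I_4) u v : (sigma K a u v)^* = sigma K a v u.
Proof.
case: a => [[|[|[|[|a]]]] ha] //; case: u; case: v;
by rewrite /sigma /= ?conj0 ?conjC1 ?conjCN1 ?conjN ?conjCi ?opprK.
Qed.

Lemma sigma0 u v : sigma K 0 u v = (u == v)%:R.
Proof. by []. Qed.
End Paulis.

Section PS.
Variable K : numClosedFieldType.
Variable t : nat.
Notation ps := (@pauli_string K t).
Notation adj := (@adjoint K (2 ^ t)).

Lemma ps_mul p q : ps p *m ps q = (\prod_k om K (p k) (q k)) *: ps (fun k => pm (p k) (q k)).
Proof.
apply/matrixP => x y; rewrite /pauli_string !mxE.
rewrite (eq_bigr (fun z => \prod_k (sigma K (p k) (bit k x) (bit k z) * sigma K (q k) (bit k z) (bit k y)))); last by move=> z _; rewrite !mxE big_split.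
rewrite (sum_bits (fun k b => sigma K (p k) (bit k x) b * sigma K (q k) b (bit k y))).
rewrite -big_split /=; apply: eq_bigr => k _; exact: sigma_mul.
Qed.

Lemma ps_eq p q : p =1 q -> ps p = ps q.
Proof. by move=> h; apply/matrixP => x y; rewrite !mxE; apply: eq_bigr => k _; rewrite h. Qed.

Lemma ps0 : ps (fun _ => 0) = 1%:M.
Proof.
apply/matrixP => x y; rewrite !mxE.
under eq_bigr do rewrite sigma0.
rewrite prod_nat_bool; congr (_%:R).
congr (nat_of_bool _); apply/idP/idP => [/forallP h|/eqP ->]; last by apply/forallP.
apply/eqP; apply: bit_eq => k; exact/eqP/h.
Qed.

Lemma conj_prod (F : 'I_t -> K) : (\prod_k F k)^* = \prod_k (F k)^*.
Proof. by rewrite rmorph_prod. Qed.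
Lemma conj_sum (F : 'I_(2 ^ t) -> K) : (\sum_k F k)^* = \sum_k (F k)^*.
Proof. by rewrite rmorph_sum. Qed.
Lemma conjM (x y : K) : (x * y)^* = x^* * y^*.
Proof. by rewrite rmorphM. Qed.

Lemma ps_adj p : adj (ps p) = ps p.
Proof.
apply/matrixP => x y; rewrite /adjoint /pauli_string !mxE conj_prod; apply: eq_bigr => k _.
by rewrite sigma_conj.
Qed.

Lemma adjZ c (A : 'M[K]_(2 ^ t)) : adj (c *: A) = c^* *: adj A.
Proof. by apply/matrixP => i j; rewrite !mxE conjM. Qed.

Lemma adjM (A B : 'M[K]_(2 ^ t)) : adj (A *m B) = adj B *m adj A.
Proof.
apply/matrixP => i j; rewrite !mxE conj_sum; apply: eq_bigr => k _.
by rewrite !mxE conjM mulrC.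
Qed.

Lemma adjK (A : 'M[K]_(2 ^ t)) : adj (adj A) = A.
Proof. by apply/matrixP => i j; rewrite !mxE conjCK. Qed.

Lemma phase_conj (c : K) : phase c -> (exists2 s, sgn s & c^* = s * c) /\ c^* * c = 1.
Proof.
case=> ->.
- by split; [exists 1; [left|]|]; rewrite ?conjC1 ?mul1r.
- by split; [exists 1; [left|]|]; rewrite ?conjCN1 ?mul1r // mulN1r opprK.
- by split; [exists (-1); [by right|]|]; rewrite conjCi ?mulN1r // mulNr ii opprK.
- by split; [exists (-1); [by right|]|]; rewrite conjN conjCi opprK ?mulN1r ?opprK // mulrN ii opprK.
Qed.

Lemma phase_conjP (c : K) : phase c -> phase (c^*).
Proof.
case=> ->; rewrite ?conjC1 ?conjCN1 ?conjN ?conjCi ?opprK;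
  first [exact: Or41 | exact: Or42 | exact: Or43 | exact: Or44].
Qed.
End PS.

Section PL.
Variable K : numClosedFieldType.
Variable t : nat.
Notation ps := (@pauli_string K t).
Notation adj := (@adjoint K (2 ^ t)).
Notation M := 'M[K]_(2 ^ t).

Lemma pauli_mul (A B : M) : is_pauli A -> is_pauli B -> is_pauli (A *m B).
Proof.
case=> c [p [hc ->]] [d [q [hd ->]]].
exists (c * d * \prod_k om K (p k) (q k)), (fun k => pm (p k) (q k)); split.
  by apply: phaseM; [exact: phaseM|apply: phase_prod => k; exact: phase_om].
by rewrite -scalemxAl -scalemxAr ps_mul !scalerA.
Qed.

Lemma pauli_adj (A : M) : is_pauli A -> is_pauli (adj A) /\ exists2 s, sgn s & adj A = s *: A.
Proof.
case=> c [p [hc ->]]; rewrite adjZ ps_adj; have [[s hs e] _] := phase_conj hc; split.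
  by exists c^*, p; split => //; exact: phase_conjP.
by exists s => //; rewrite e scalerA.
Qed.

Lemma pauli_unit (A : M) : is_pauli A -> adj A *m A = 1%:M /\ A *m adj A = 1%:M.
Proof.
case=> c [p [hc ->]]; rewrite adjZ ps_adj; have [_ e] := phase_conj hc.
have pp : ps p *m ps p = 1%:M.
  rewrite ps_mul big1 ?scale1r; last by move=> k _; rewrite om_self.
  by rewrite -ps0; apply: ps_eq => k; rewrite pm_self.
by rewrite -!scalemxAl -!scalemxAr !scalerA pp e mulrC e scale1r.
Qed.

Lemma sign_prod (F G : 'I_t -> K) : (forall k, exists2 s, sgn s & F k = s * G k) ->
  exists2 s, sgn s & \prod_k F k = s * \prod_k G k.
Proof.
move=> H; elim/big_rec2: _ => [|k y1 y2 _ [s hs ->]].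
  by exists 1; [left|rewrite mul1r].
have [u hu ->] := H k; exists (u * s); first exact: sgnM.
by rewrite mulrACA.
Qed.

Lemma pauli_comm (A B : M) : is_pauli A -> is_pauli B -> exists2 s, sgn s & A *m B = s *: (B *m A).
Proof.
case=> c [p [hc ->]] [d [q [hd ->]]].
have [s hs e] := sign_prod (fun k => om_comm K (p k) (q k)).
exists s => //.
rewrite -!scalemxAl -!scalemxAr !ps_mul !scalerA e.
rewrite (@ps_eq _ t (fun k => pm (q k) (p k)) (fun k => pm (p k) (q k))); last by move=> k; exact: pm_comm.
congr (_ *: _); ring.
Qed.
End PL.

Lemma bitsplit (k j a c : nat) : (a < 2 ^ k)%N ->
  odd ((c * 2 ^ k + a) %/ 2 ^ j) = if (j < k)%N then odd (a %/ 2 ^ j) else odd (c %/ 2 ^ (j - k)).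
Proof.
move=> ha; case: ltnP => hjk.
  have e : (2 ^ k = 2 ^ (k - j) * 2 ^ j)%N by rewrite -expnD subnK // ltnW.
  rewrite divnDl; last by rewrite e mulnA dvdn_mull.
  rewrite oddD {1}e mulnA mulnK ?expn_gt0 // oddM oddX.
  by rewrite subn_eq0 leqNgt hjk /= andbF.
have e : (2 ^ j = 2 ^ k * 2 ^ (j - k))%N by rewrite -expnD subnKC.
by rewrite e divnMA divnMDl ?expn_gt0 // (divn_small ha) addn0.
Qed.

Lemma odd_pred_div (b m : nat) : odd b -> (0 < m)%N -> (b.-1 %/ 2 ^ m = b %/ 2 ^ m)%N.
Proof.
move=> hb hm; rewrite -(subnKC hm) expnS !divnMA; congr (_ %/ _)%N.
case: b hb => [//|b] /= hb.
rewrite [in RHS](divn_eq b 2) modn2 (negbTE hb) addn0 -(addn1 (b %/ 2 * 2)) divnMDl //.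
by rewrite (@divn_small 1 2) // addn0.
Qed.

Lemma clear_nat (x k j : nat) : odd (x %/ 2 ^ k)%N ->
  odd ((x - 2 ^ k) %/ 2 ^ j)%N = odd (x %/ 2 ^ j)%N && (j != k).
Proof.
have := divn_eq x (2 ^ k); move: (ltn_mod x (2 ^ k)); rewrite expn_gt0 /=.
move: (x %/ 2 ^ k)%N (x %% 2 ^ k)%N => b a ha ex hb.
case: b hb ex => [//|b] hb ex.
have e2 : (x - 2 ^ k = b * 2 ^ k + a)%N by rewrite ex mulSn -addnA addKn.
rewrite e2 ex !bitsplit //.
case: (ltngtP j k) => h.
- by rewrite andbT.
- rewrite -(@odd_pred_div b.+1 (j - k)) ?subn_gt0 //=.
  by rewrite andbT.
- by rewrite h subnn expn0 !divn1 andbF; move: hb => /= /negPf.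
Qed.

Section Clear.
Variable t : nat.
Lemma bit_clear (k j : 'I_t) (x : 'I_(2 ^ t)) :
  bit j (clearbit k x) = bit j x && (j != k).
Proof.
rewrite /clearbit /bit val_insubd.
case hk: (odd (x %/ 2 ^ k)%N) => /=.
  rewrite mul1n ifT; last by apply: leq_ltn_trans (leq_subr _ _) (ltn_ord x).
  exact: clear_nat.
rewrite mul0n subn0 ltn_ord.
case: (eqVneq j k) => [->|]; by rewrite ?hk ?andbT ?andbF.
Qed.
End Clear.

Lemma oppr_self (K : numClosedFieldType) (w : K) : - w = w -> w = 0.
Proof.
move=> h; apply/eqP; have : w *+ 2 == 0 by rewrite mulr2n -{1}h addNr.
by rewrite mulrn_eq0.
Qed.

Section Triv.
Variable K : numClosedFieldType.
Variable t : nat.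
Variable k : 'I_t.
Notation M := 'M[K]_(2 ^ t).
Definition ek (a : 'I_4) : 'I_t -> 'I_4 := fun j => if j == k then a else 0.
Definition Xk : M := pauli_string K (ek (@Ordinal 4 1 isT)).
Definition Zk : M := pauli_string K (ek (@Ordinal 4 3 isT)).
Definition flip (x : 'I_(2 ^ t)) : 'I_(2 ^ t) := fromb [ffun j => bit j x (+) (j == k)].
Definition zs (x : 'I_(2 ^ t)) : K := if bit k x then -1 else 1.

Lemma bit_flip j x : bit j (flip x) = bit j x (+) (j == k).
Proof. by rewrite /flip bit_fromb ffunE. Qed.

Lemma flipK x : flip (flip x) = x.
Proof. by apply: bit_eq => j; rewrite !bit_flip addbK. Qed.

Lemma Xk_entry x y : Xk x y = (y == flip x)%:R.
Proof.
rewrite /Xk /pauli_string mxE.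
rewrite (eq_bigr (fun j => (bit j y == bit j x (+) (j == k))%:R)); last first.
  move=> j _; rewrite /ek; case: (eqVneq j k) => _ /=; rewrite /sigma /=.
    by case: (bit j x); case: (bit j y).
  by rewrite addbF eq_sym.
rewrite prod_nat_bool; congr (_%:R); congr (nat_of_bool _).
apply/idP/idP => [/forallP h|/eqP ->]; last by apply/forallP => j; rewrite bit_flip.
by apply/eqP; apply: bit_eq => j; rewrite bit_flip; exact/eqP/h.
Qed.

Lemma Zk_entry x y : Zk x y = (x == y)%:R * zs x.
Proof.
rewrite /Zk /pauli_string mxE.
case: (eqVneq x y) => [<-|nxy].
  rewrite mul1r (bigD1 k) //= big1 ?mulr1; last first.
    by move=> j /negPf hj; rewrite /ek hj /sigma /= eqxx.
  by rewrite /ek eqxx /sigma /= eqxx /zs.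
have [j hj] : exists j, bit j x != bit j y.
  apply/existsP; rewrite -negb_forall; apply/negP => /forallP h.
  by move: nxy; rewrite (bit_eq (fun j => (eqP (h j)))) eqxx.
rewrite mul0r (bigD1 j) //= /ek /sigma; case: (j == k) => /=; by rewrite (negPf hj) mul0r.
Qed.

Lemma mulXr (W : M) x y : (W *m Xk) x y = W x (flip y).
Proof.
rewrite mxE (bigD1 (flip y)) //= Xk_entry flipK eqxx mulr1 big1 ?addr0 //.
move=> z hz; rewrite Xk_entry; case: eqP => [e|]; last by rewrite mulr0.
by move: hz; rewrite e flipK eqxx.
Qed.

Lemma mulXl (W : M) x y : (Xk *m W) x y = W (flip x) y.
Proof.
rewrite mxE (bigD1 (flip x)) //= Xk_entry eqxx mul1r big1 ?addr0 //.
by move=> z /negPf hz; rewrite Xk_entry hz mul0r.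
Qed.

Lemma mulZr (W : M) x y : (W *m Zk) x y = W x y * zs y.
Proof.
rewrite mxE (bigD1 y) //= Zk_entry eqxx mul1r big1 ?addr0 //.
by move=> z /negPf hz; rewrite Zk_entry hz mul0r mulr0.
Qed.

Lemma mulZl (W : M) x y : (Zk *m W) x y = zs x * W x y.
Proof.
rewrite mxE (bigD1 x) //= Zk_entry eqxx mul1r big1 ?addr0 //.
by move=> z; rewrite eq_sym => /negPf hz; rewrite Zk_entry hz mul0r mul0r.
Qed.

Lemma clear_flip x : clearbit k (flip x) = clearbit k x.
Proof.
apply: bit_eq => j; rewrite !bit_clear bit_flip.
by case: (eqVneq j k) => _ /=; rewrite ?andbF ?addbF.
Qed.

Lemma triv_iff (W : M) :
  acts_trivially_on W k <-> (W *m Xk = Xk *m W /\ W *m Zk = Zk *m W).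
Proof.
split.
  case=> A hA; split; apply/matrixP => x y.
    rewrite mulXr mulXl !hA !clear_flip !bit_flip eqxx !addbT.
    by case: (bit k x); case: (bit k y).
  rewrite mulZr mulZl hA /zs.
  by case: (bit k x); case: (bit k y); rewrite /= ?mul0r ?mulr0 ?mulr1 ?mul1r // mulrN1 mulN1r.
case=> hX hZ; exists W => x y.
case Ex: (bit k x); case Ey: (bit k y); rewrite /= ?mul1r ?mul0r.
- have -> : clearbit k x = flip x.
    by apply: bit_eq => j; rewrite bit_clear bit_flip; case: (eqVneq j k) => [->|] /=; rewrite ?Ex ?andbT ?addbF.
  have -> : clearbit k y = flip y.
    by apply: bit_eq => j; rewrite bit_clear bit_flip; case: (eqVneq j k) => [->|] /=; rewrite ?Ey ?andbT ?addbF.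
  have := congr1 (fun A : M => A x (flip y)) hX; by rewrite /= mulXr mulXl flipK.
- apply: oppr_self; have := congr1 (fun A : M => A x y) hZ.
  by rewrite /= mulZr mulZl /zs Ex Ey mulr1 mulN1r => h; rewrite {2}h.
- apply: oppr_self; have := congr1 (fun A : M => A x y) hZ.
  by rewrite /= mulZr mulZl /zs Ex Ey mul1r mulrN1.
- have -> : clearbit k x = x.
    by apply: bit_eq => j; rewrite bit_clear; case: (eqVneq j k) => [->|] /=; rewrite ?Ex ?andbT ?andbF.
  have -> : clearbit k y = y.
    by apply: bit_eq => j; rewrite bit_clear; case: (eqVneq j k) => [->|] /=; rewrite ?Ey ?andbT ?andbF.
  by [].
Qed.
End Triv.

Section Main.
Variable K : numClosedFieldType.
Variable t : nat.
Notation M := 'M[K]_(2 ^ t).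
Notation adj := (@adjoint K (2 ^ t)).

Lemma comm_conj (U G : M) : adj U *m U = 1%:M -> U *m adj U = 1%:M ->
  U *m G = G *m U -> adj U *m G = G *m adj U.
Proof.
move=> h1 h2 e.
have : adj U *m (U *m G) *m adj U = adj U *m (G *m U) *m adj U by rewrite e.
by rewrite !mulmxA h1 mul1mx -!mulmxA h2 mulmx1.
Qed.

Lemma sgn_sq (s : K) : sgn s -> s * s = 1.
Proof. by case=> ->; rewrite ?mulr1 ?mulN1r ?opprK. Qed.

Lemma Q_comm (P C G : M) : is_pauli P -> is_pauli G ->
  adj C *m C = 1%:M -> C *m adj C = 1%:M -> C *m G = G *m C ->
  P *m C *m adj P *m adj C *m G = G *m (P *m C *m adj P *m adj C).
Proof.
move=> hP hG u1 u2 e.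
have [s hs eP] := pauli_comm hP hG.
have [_ [f hf ePa]] := pauli_adj hP.
have eA : adj P *m G = s *: (G *m adj P).
  rewrite ePa -(scalemxAl f P G) eP -(scalemxAr f G P).
  by rewrite !scalerA mulrC.
have eC' := comm_conj u1 u2 e.
have h1 : P *m C *m adj P *m adj C *m G = P *m C *m (adj P *m G) *m adj C.
  by rewrite -!mulmxA eC'.
rewrite h1 eA -(scalemxAr s (P *m C) (G *m adj P)) -(scalemxAl s _ (adj C)).
have h2 : P *m C *m (G *m adj P) *m adj C = P *m G *m C *m adj P *m adj C.
  by rewrite !mulmxA -(mulmxA P C G) e !mulmxA.
rewrite h2 eP -(scalemxAl s (G *m P) C) -(scalemxAl s _ (adj P)) -(scalemxAl s _ (adj C)).
by rewrite scalerA sgn_sq // scale1r !mulmxA.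
Qed.
End Main.

Lemma pauli_ek (t : nat) (k : 'I_t) (K : numClosedFieldType) a :
  is_pauli (pauli_string K (ek k a)).
Proof. by exists 1, (ek k a); split; [exact: Or41|rewrite scale1r]. Qed.

Unset Implicit Arguments.
Theorem proposition3 (K : numClosedFieldType) (t : nat)
    (C P : 'M[K]_(2 ^ t)) :
  is_PSC C -> is_pauli P ->
  exists Q : 'M[K]_(2 ^ t),
    [/\ is_pauli Q,
        ctrl P *m idtens C = ctrl Q *m idtens C *m ctrl P,
        (Q *m C = C *m Q \/ Q *m C = - (C *m Q))
      & forall k : 'I_t, in_supp Q k -> in_supp C k].
Proof.
move=> [[[u2 u1] Ccl] [_ hR]] hP.
have [PaP PPa] := pauli_unit hP.
have [hPa [f hf ePa]] := pauli_adj hP.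
exists (P *m C *m adjoint P *m adjoint C); split.
- have := pauli_mul hP (Ccl _ hPa); by rewrite !mulmxA.
- rewrite /ctrl /idtens !mulmx_block !mulmx0 !mul0mx !addr0 !add0r !mul1mx !mulmx1.
  rewrite ?mulmx0 ?mul0mx ?addr0 ?add0r ?mul1mx ?mulmx1; congr block_mx.
  rewrite -(mulmxA (P *m C *m adjoint P) (adjoint C) C) u1 mulmx1.
  by rewrite -(mulmxA (P *m C) (adjoint P) P) PaP mulmx1.
- set D := C *m P *m adjoint C.
  have hD : is_pauli D := Ccl P hP.
  have [s1 hs1 eR] := pauli_comm hR hPa.
  have hW := pauli_mul hD hPa.
  have [_ [s2 hs2 eW]] := pauli_adj hW.
  have hQ : P *m C *m adjoint P *m adjoint C = s2 *: (D *m adjoint P).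
    by rewrite -eW /D !adjM !adjK !mulmxA.
  have eQC : P *m C *m adjoint P *m adjoint C *m C = s2 *: (D *m adjoint P *m C).
    by rewrite hQ -(scalemxAl s2 (D *m adjoint P) C).
  have eDC : D *m C = C *m P by rewrite /D -mulmxA u1 mulmx1.
  have eCQ : C *m (P *m C *m adjoint P *m adjoint C) = s1 *: (D *m adjoint P *m C).
    have -> : C *m (P *m C *m adjoint P *m adjoint C) = D *m (C *m C *m adjoint P) *m adjoint C.
      by rewrite !mulmxA eDC.
    rewrite eR -(scalemxAr s1 D (adjoint P *m (C *m C))) -(scalemxAl s1 _ (adjoint C)).
    by rewrite !mulmxA -(mulmxA (D *m adjoint P *m C) C (adjoint C)) u2 mulmx1.
  rewrite eQC eCQ.
  case: hs1 => ->; case: hs2 => ->; rewrite ?scaleN1r ?scale1r ?opprK; by [left|right].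
- move=> k hQ hC; apply: hQ.
  have [hX hZ] := (triv_iff k C).1 hC.
  apply/triv_iff; split; apply: Q_comm => //; exact: pauli_ek.
Qed.
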